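(* Suppose there are at least three states ($n\ge3$). A non-trivial updating rule that continuously distorts beliefs respects the Blackwell order if and only if it is Bayes' law, i.e. $\varphi^{\mu}(x)=x$ for all $x\in\Delta$ and all priors $\mu$ in the relative interior of $\Delta$.
   Context: Let $\Theta$ be a finite set of states, $|\Theta|=n$, and $\Delta=\Delta(\Theta)$ the simplex of beliefs on $\Theta$. An experiment is a map $\pi:\Theta\to\Delta(S)$ with $S$ finite; with a full-support prior $\mu$ it induces the Bayesian distribution over posteriors $\rho_B$, a finitely supported distribution on $\Delta$ with mean $\mu$ (every such distribution arises from some experiment). Blackwell order: $\pi\succeq\pi'$ iff $\rho_B'$ is a mean-preserving contraction of $\rho_B$. An updating rule is given, for each prior $\mu$ in the relative interior of $\Delta$, by a distortion function $\varphi^{\mu}:\Delta\to\Delta$: when the Bayesian posterior is $x$, the decision maker holds belief $\varphi^{\mu}(x)$. For a compact action set $A$, continuous $u:A\times\Theta\to\mathbb{R}$, and consistent choice $a^*:\Delta\to A$ (i.e. $a^*(y)\in\arg\max_{a}\mathbb{E}_y u(a,\theta)$ for all $y$), let $W(x)=\mathbb{E}_x u(a^*(\varphi^{\mu}(x)),\theta)$. The rule respects the Blackwell order for $\mu$ if for all such $A,u,a^*$ and all experiments $\pi\succeq\pi'$ with Bayesian distributions $\rho_B,\rho_B'$, $\mathbb{E}_{\rho_B}W\ge\mathbb{E}_{\rho_B'}W$; it respects the Blackwell order if it does so for every full-support $\mu$. The rule continuously distorts beliefs if each $\varphi^{\mu}$ is continuous on $\Delta$; it is non-trivial if for every $\mu$,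 $\varphi^{\mu}$ is not constant on $\Delta$. *)

(* Defs.v *)
From HB Require Import structures.
From mathcomp Require Import all_boot all_order all_algebra.
From mathcomp Require Import all_classical all_reals all_analysis.

Set Implicit Arguments.
Unset Strict Implicit.
Unset Printing Implicit Defensive.

Import Order.TTheory GRing.Theory Num.Theory.
Import numFieldNormedType.Exports.
Local Open Scope classical_set_scope.
Local Open Scope ring_scope.

Section Defs.
Variables (R : realType) (n : nat).

(* Beliefs on Theta = 'I_n are row vectors; Delta is the simplex. *)
Definition simplex : set 'rV[R]_n :=
  [set x | (forall i, 0 <= x ord0 i) /\ \sum_i x ord0 i = 1].

Definition rel_interior : set 'rV[R]_n :=
  [set x | (forall i, 0 < x ord0 i) /\ \sum_i x ord0 i = 1].

Definition experiment (S : finType) (pi : 'I_n -> S -> R) : Prop :=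
  (forall t s, 0 <= pi t s) /\ (forall t, \sum_s pi t s = 1).

Definition sig_prob (S : finType) (mu : 'rV[R]_n) (pi : 'I_n -> S -> R) (s : S) : R :=
  \sum_t mu ord0 t * pi t s.

(* Bayesian posterior after signal s (irrelevant when sig_prob = 0). *)
Definition posterior (S : finType) (mu : 'rV[R]_n) (pi : 'I_n -> S -> R) (s : S)
  : 'rV[R]_n :=
  \row_t (mu ord0 t * pi t s / sig_prob mu pi s).

(* Expectation of f under the Bayesian distribution over posteriors rho_B
   induced by (mu, pi): rho_B puts mass sig_prob s on posterior s. *)
Definition bayes_expect (S : finType) (mu : 'rV[R]_n) (pi : 'I_n -> S -> R)
  (f : 'rV[R]_n -> R) : R :=
  \sum_s sig_prob mu pi s * f (posterior mu pi s).

(* rho_B' (from pi') is a mean-preserving contraction of rho_B (from pi):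
   there is a coupling g of rho_B and rho_B' such that the conditional mean
   of the rho_B-posterior given each rho_B'-posterior equals the latter. *)
Definition mpc (S S' : finType) (mu : 'rV[R]_n)
  (pi : 'I_n -> S -> R) (pi' : 'I_n -> S' -> R) : Prop :=
  exists g : S -> S' -> R,
    [/\ forall s s', 0 <= g s s',
        forall s, \sum_s' g s s' = sig_prob mu pi s,
        forall s', \sum_s g s s' = sig_prob mu pi' s' &
        forall s' t, \sum_s g s s' * posterior mu pi s ord0 t
                     = sig_prob mu pi' s' * posterior mu pi' s' ord0 t].

Definition blackwell_geq (S S' : finType) (mu : 'rV[R]_n)
  (pi : 'I_n -> S -> R) (pi' : 'I_n -> S' -> R) : Prop :=
  mpc mu pi pi'.

Definition exp_util (A : Type) (u : A -> 'I_n -> R) (y : 'rV[R]_n) (a : A) : R :=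
  \sum_t y ord0 t * u a t.

Definition consistent_choice (A : Type) (u : A -> 'I_n -> R) (astar : 'rV[R]_n -> A)
  : Prop :=
  forall y, simplex y -> forall a, exp_util u y a <= exp_util u y (astar y).

Definition updating_rule (phi : 'rV[R]_n -> 'rV[R]_n -> 'rV[R]_n) : Prop :=
  forall mu, rel_interior mu -> forall x, simplex x -> simplex (phi mu x).

Definition W (phi : 'rV[R]_n -> 'rV[R]_n -> 'rV[R]_n) (mu : 'rV[R]_n)
  (A : Type) (u : A -> 'I_n -> R) (astar : 'rV[R]_n -> A) (x : 'rV[R]_n) : R :=
  exp_util u x (astar (phi mu x)).

Definition respects_blackwell_for (phi : 'rV[R]_n -> 'rV[R]_n -> 'rV[R]_n)
  (mu : 'rV[R]_n) : Prop :=
  forall (A : topologicalType) (u : A -> 'I_n -> R) (astar : 'rV[R]_n -> A),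
    compact [set: A] -> (forall t, continuous (fun a => u a t)) ->
    consistent_choice u astar ->
    forall (S S' : finType) (pi : 'I_n -> S -> R) (pi' : 'I_n -> S' -> R),
      experiment pi -> experiment pi' -> blackwell_geq mu pi pi' ->
      bayes_expect mu pi' (W phi mu u astar) <= bayes_expect mu pi (W phi mu u astar).

Definition respects_blackwell (phi : 'rV[R]_n -> 'rV[R]_n -> 'rV[R]_n) : Prop :=
  forall mu, rel_interior mu -> respects_blackwell_for phi mu.

Definition continuously_distorts (phi : 'rV[R]_n -> 'rV[R]_n -> 'rV[R]_n) : Prop :=
  forall mu, rel_interior mu -> {within simplex, continuous (phi mu)}.

Definition nontrivial_rule (phi : 'rV[R]_n -> 'rV[R]_n -> 'rV[R]_n) : Prop :=
  forall mu, rel_interior mu ->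
    exists x y, [/\ simplex x, simplex y & phi mu x <> phi mu y].

Definition is_bayes (phi : 'rV[R]_n -> 'rV[R]_n -> 'rV[R]_n) : Prop :=
  forall mu, rel_interior mu -> forall x, simplex x -> phi mu x = x.

End Defs.

(* Main.v *)
Require Import Defs.
From HB Require Import structures.
From mathcomp Require Import all_boot all_order all_algebra.
From mathcomp Require Import all_classical all_reals all_analysis.
From mathcomp Require Import ring lra.

Set Implicit Arguments.
Unset Strict Implicit.
Unset Printing Implicit Defensive.
Import Order.TTheory GRing.Theory Num.Theory.
Import numFieldNormedType.Exports.
Local Open Scope classical_set_scope.
Local Open Scope ring_scope.

Lemma sig_prob_ge0 (R : realType) (n : nat) (S : finType) (mu : 'rV[R]_n)
  (pi : 'I_n -> S -> R) s :
  experiment pi -> (forall t, 0 <= mu ord0 t) -> 0 <= sig_prob mu pi s.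
Proof.
move=> [hp _] hm; rewrite /sig_prob; apply: sumr_ge0 => t _.
exact: mulr_ge0.
Qed.

Lemma post_simplex (R : realType) (n : nat) (S : finType) (mu : 'rV[R]_n)
  (pi : 'I_n -> S -> R) s :
  experiment pi -> (forall t, 0 <= mu ord0 t) -> sig_prob mu pi s != 0 ->
  simplex (posterior mu pi s).
Proof.
move=> hpi hm hs; have hs0 := sig_prob_ge0 s hpi hm.
case: (hpi) => hp _.
split.
- move=> t; rewrite mxE; apply: divr_ge0 => //; exact: mulr_ge0.
- under eq_bigr do rewrite mxE.
  by rewrite -mulr_suml -/(sig_prob mu pi s) mulfV.
Qed.

Lemma bayes_respects (R : realType) (n : nat)
  (phi : 'rV[R]_n -> 'rV[R]_n -> 'rV[R]_n) :
  is_bayes phi -> respects_blackwell phi.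
Proof.
move=> hb mu hmu A u astar _ _ hcons S S' pi pi' hpi hpi' [g [g0 gs gs' gm]].
have hm : forall t, 0 <= mu ord0 t by move=> t; apply/ltW; case: hmu.
rewrite /bayes_expect.
have key : forall s', sig_prob mu pi' s' * W phi mu u astar (posterior mu pi' s')
    <= \sum_s g s s' * W phi mu u astar (posterior mu pi s).
  move=> s'.
  pose a' := astar (phi mu (posterior mu pi' s')).
  have e1 : sig_prob mu pi' s' * W phi mu u astar (posterior mu pi' s') =
      \sum_t (sig_prob mu pi' s' * posterior mu pi' s' ord0 t) * u a' t.
    have [->|hs] := eqVneq (sig_prob mu pi' s') 0.
      by rewrite mul0r big1 // => t _; rewrite !mul0r.
    rewrite /W hb //; last exact: post_simplex.
    rewrite /exp_util mulr_sumr; apply: eq_bigr => t _; rewrite mulrA.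
    by rewrite /a' hb //; exact: post_simplex.
  rewrite e1.
  under eq_bigr do rewrite -gm mulr_suml.
  rewrite exchange_big /=; apply: ler_sum => s _.
  under eq_bigr do rewrite -mulrA.
  rewrite -mulr_sumr.
  have [->|hg] := eqVneq (g s s') 0; first by rewrite !mul0r.
  have hsg : sig_prob mu pi s != 0.
    rewrite -gs; apply/lt0r_neq0.
    rewrite (bigD1 s') //=.
    have h1 : 0 < g s s' by rewrite lt0r hg g0.
    have h2 : 0 <= \sum_(i | i != s') g s i by apply: sumr_ge0 => ? _.
    lra.
  apply: ler_wpM2l => //.
  rewrite /W (hb mu hmu (posterior mu pi s)); last exact: post_simplex.
  exact: hcons (post_simplex hpi hm hsg) a'.
apply: (le_trans (ler_sum _ (fun s' _ => key s'))).
rewrite exchange_big /=; apply: ler_sum => s _.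
by rewrite -mulr_suml gs.
Qed.

Lemma sum_bb (R : ringType) (F : bool * bool -> R) :
  \sum_s F s = F (true,true) + F (true,false) + (F (false,true) + F (false,false)).
Proof. transitivity (\sum_(p : bool * bool) F (p.1, p.2)).
  by apply: eq_bigr => -[x y].
rewrite -(pair_big xpredT xpredT (fun i j => F (i,j))) /=. by rewrite !big_bool. Qed.

Definition mkexp (R : realType) (n : nat) (S : finType) (mu : 'rV[R]_n)
  (q : S -> R) (xs : S -> 'rV[R]_n) : 'I_n -> S -> R :=
  fun t s => q s * xs s ord0 t / mu ord0 t.

Lemma relint_neq0 (R : realType) (n : nat) (mu : 'rV[R]_n) t :
  rel_interior mu -> mu ord0 t != 0.
Proof. by case=> h _; rewrite gt_eqF ?h. Qed.

Lemma mkexp_exp (R : realType) (n : nat) (S : finType) (mu : 'rV[R]_n)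
  (q : S -> R) (xs : S -> 'rV[R]_n) :
  rel_interior mu -> (forall s, 0 <= q s) -> (forall s, simplex (xs s)) ->
  (forall t, \sum_s q s * xs s ord0 t = mu ord0 t) ->
  experiment (mkexp mu q xs).
Proof.
move=> hmu hq hx hsum; split.
- move=> t s; rewrite /mkexp; apply: divr_ge0; last by apply/ltW; case: hmu.
  by apply: mulr_ge0 => //; case: (hx s).
- move=> t; rewrite /mkexp -mulr_suml hsum mulfV //; exact: relint_neq0.
Qed.

Lemma mkexp_sig (R : realType) (n : nat) (S : finType) (mu : 'rV[R]_n)
  (q : S -> R) (xs : S -> 'rV[R]_n) s :
  rel_interior mu -> simplex (xs s) -> sig_prob mu (mkexp mu q xs) s = q s.
Proof.
move=> hmu [_ hx]; rewrite /sig_prob /mkexp.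
transitivity (\sum_t q s * xs s ord0 t).
  apply: eq_bigr => t _; field; exact: relint_neq0.
by rewrite -mulr_sumr hx mulr1.
Qed.

Lemma mkexp_post (R : realType) (n : nat) (S : finType) (mu : 'rV[R]_n)
  (q : S -> R) (xs : S -> 'rV[R]_n) s :
  rel_interior mu -> simplex (xs s) -> q s != 0 ->
  posterior mu (mkexp mu q xs) s = xs s.
Proof.
move=> hmu hx hq; apply/matrixP => i t; rewrite !ord1 mxE mkexp_sig //.
rewrite /mkexp; field; apply/andP; split => //; exact: relint_neq0.
Qed.

Lemma mkexp_expect (R : realType) (n : nat) (S : finType) (mu : 'rV[R]_n)
  (q : S -> R) (xs : S -> 'rV[R]_n) f :
  rel_interior mu -> (forall s, simplex (xs s)) ->
  bayes_expect mu (mkexp mu q xs) f = \sum_s q s * f (xs s).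
Proof.
move=> hmu hx; rewrite /bayes_expect; apply: eq_bigr => s _.
rewrite mkexp_sig //; have [->|hq] := eqVneq (q s) 0; first by rewrite !mul0r.
by rewrite mkexp_post.
Qed.

Lemma simplex_le1 (R : realType) (n : nat) (x : 'rV[R]_n) t :
  simplex x -> x ord0 t <= 1.
Proof.
case=> h0 h1; rewrite -h1 (bigD1 t) //= lerDl; exact: sumr_ge0.
Qed.

Lemma relint_min (R : realType) (n : nat) (x : 'rV[R]_n) :
  rel_interior x -> exists e : R, [/\ 0 < e, e < 1 & forall t, e <= x ord0 t].
Proof.
have h2 : (0:R) < 1/2 by lra.
case=> h0 _; exists (\big[Order.min/(1/2)]_t x ord0 t); split.
- apply: (big_ind (fun y => 0 < y)) ; [move: h2; exact: id | | ].
  by move=> y z hy hz; rewrite lt_min hy hz.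
  by move=> i _; exact: h0.
- apply: (@le_lt_trans _ _ (1/2)); [exact: bigmin_le_id | lra].
- move=> t; exact: bigmin_le.
Qed.

Lemma simplex_conv (R : realType) (n : nat) (a b : 'rV[R]_n) lam :
  simplex a -> simplex b -> 0 <= lam <= 1 -> simplex (lam *: a + (1 - lam) *: b).
Proof.
move=> [a0 a1] [b0 b1] /andP[l0 l1]; split.
- move=> t; rewrite !mxE; apply: addr_ge0; apply: mulr_ge0 => //; lra.
- under eq_bigr do rewrite !mxE.
  by rewrite big_split /= -!mulr_sumr a1 b1 !mulr1 addrC subrK.
Qed.

Lemma blackwell_convex (R : realType) (n : nat)
  (phi : 'rV[R]_n -> 'rV[R]_n -> 'rV[R]_n) (mu : 'rV[R]_n)
  (A : topologicalType) (u : A -> 'I_n -> R) (astar : 'rV[R]_n -> A) :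
  rel_interior mu -> respects_blackwell_for phi mu ->
  compact [set: A] -> (forall t, continuous (fun a => u a t)) ->
  consistent_choice u astar ->
  forall a b lam, simplex a -> simplex b -> 0 < lam < 1 ->
  W phi mu u astar (lam *: a + (1 - lam) *: b) <=
    lam * W phi mu u astar a + (1 - lam) * W phi mu u astar b.
Proof.
move=> hmu hbw hA hu hc a b lam ha hb /andP[l0 l1].
set m := lam *: a + (1 - lam) *: b.
have hm : simplex m by apply: simplex_conv => //; apply/andP; split; lra.
have [p [p0 p1 pm]] := relint_min hmu.
set w := (1 - p)^-1 *: (mu - p *: m).
have hmt : forall t, m ord0 t = lam * a ord0 t + (1 - lam) * b ord0 t.
  by move=> t; rewrite !mxE.
have hwt : forall t, w ord0 t = (1 - p)^-1 * (mu ord0 t - p * m ord0 t).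
  by move=> t; rewrite !mxE.
have hw : simplex w.
  split.
  - move=> t; rewrite hwt; apply: mulr_ge0; first by rewrite invr_ge0; lra.
    have := simplex_le1 t hm; have := pm t; case: (hm) => hm0 _; have := hm0 t.
    move: (m ord0 t) (mu ord0 t) => x y; nra.
  - under eq_bigr do rewrite hwt.
    rewrite -mulr_sumr big_split /= sumrN -mulr_sumr.
    case: (hm) => _ ->; case: (hmu) => _ ->; rewrite mulr1 mulVf //; lra.
pose q := fun s : bool * bool => match s with
  | (true, true) => p * lam | (true, false) => p * (1 - lam)
  | (false, _) => (1 - p) / 2 end.
pose xs := fun s : bool * bool => match s with
  | (true, true) => a | (true, false) => b | (false, _) => w end.
pose q' := fun s : bool => if s then p else 1 - p.
pose xs' := fun s : bool => if s then m else w.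
have hq : forall s, 0 < q s.
  move=> [[] []]; rewrite /q /=.
  - by apply: mulr_gt0.
  - apply: mulr_gt0 => //; lra.
  - have h : 0 < 1 - p by lra.
    by apply: divr_gt0.
  - have h : 0 < 1 - p by lra.
    by apply: divr_gt0.
have hq' : forall s, 0 < q' s by case; rewrite /q'; lra.
have hxs : forall s, simplex (xs s) by move=> [[] []].
have hxs' : forall s, simplex (xs' s) by case.
have hexp : experiment (mkexp mu q xs).
  apply: mkexp_exp => //; first by move=> s; apply/ltW.
  move=> t; rewrite sum_bb /q /xs /= hwt hmt; field; lra.
have hexp' : experiment (mkexp mu q' xs').
  apply: mkexp_exp => //; first by move=> s; apply/ltW.
  move=> t; rewrite big_bool /q' /xs' /= hwt; field; lra.
have hpost : forall s, posterior mu (mkexp mu q xs) s = xs s.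
  by move=> s; apply: mkexp_post => //; rewrite gt_eqF.
have hpost' : forall s, posterior mu (mkexp mu q' xs') s = xs' s.
  by move=> s; apply: mkexp_post => //; rewrite gt_eqF.
have hsig : forall s, sig_prob mu (mkexp mu q xs) s = q s.
  by move=> s; apply: mkexp_sig.
have hsig' : forall s, sig_prob mu (mkexp mu q' xs') s = q' s.
  by move=> s; apply: mkexp_sig.
have hmpc : blackwell_geq mu (mkexp mu q xs) (mkexp mu q' xs').
  exists (fun s s' => if s.1 == s' then q s else 0); split.
  - by move=> s s'; case: eqP => _ //; apply/ltW.
  - by move=> [[] []]; rewrite big_bool hsig /=; rewrite ?addr0 ?add0r.
  - move=> s'; rewrite sum_bb hsig' /q /q'; case: s' => /=; rewrite ?addr0 ?add0r.
      by ring.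
    by field.
  - move=> s' t; rewrite sum_bb hsig' hpost' !hpost /q /q' /xs /xs'.
    case: s' => /=; rewrite ?mul0r ?addr0 ?add0r ?mxE; [by ring | field; rewrite gt_eqF // subr_gt0 p1 //].
have H := hbw A u astar hA hu hc _ _ _ _ hexp hexp' hmpc.
move: H; rewrite !mkexp_expect // sum_bb big_bool /q /q' /xs /xs' /=.
move=> H.
have H2 : p * W phi mu u astar m <=
    p * (lam * W phi mu u astar a + (1 - lam) * W phi mu u astar b).
  move: H; set Wm := W _ _ _ _ m; set Wa := W _ _ _ _ a; set Wb := W _ _ _ _ b;
    set Ww := W _ _ _ _ w => H.
  have -> : p * (lam * Wa + (1 - lam) * Wb) = p * lam * Wa + p * (1 - lam) * Wb by ring.
  have E : (1 - p) / 2 * Ww + (1 - p) / 2 * Ww = (1 - p) * Ww by field.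
  rewrite E in H.
  lra.
by rewrite -(ler_pM2l p0).
Qed.

Definition lin (R : realType) (n : nat) (v : 'I_n -> R) (y : 'rV[R]_n) : R :=
  \sum_t y ord0 t * v t.

Definition uv (R : realType) (n : nat) (v : 'I_n -> R) : bool -> 'I_n -> R :=
  fun a t => if a then v t else 0.

Definition av (R : realType) (n : nat) (v : 'I_n -> R) : 'rV[R]_n -> bool :=
  fun y => 0 <= lin v y.

Lemma Wv_eq (R : realType) (n : nat) (phi : 'rV[R]_n -> 'rV[R]_n -> 'rV[R]_n) mu v x :
  W phi mu (uv v) (av v) x = if 0 <= lin v (phi mu x) then lin v x else 0.
Proof.
rewrite /W /exp_util /av /uv; case: ifP => _ //.
by rewrite big1 // => t _; rewrite mulr0.
Qed.

Lemma lin_conv (R : realType) (n : nat) (v : 'I_n -> R) (a b : 'rV[R]_n) lam :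
  lin v (lam *: a + (1 - lam) *: b) = lam * lin v a + (1 - lam) * lin v b.
Proof.
rewrite /lin !mulr_sumr -big_split /=; apply: eq_bigr => t _; rewrite !mxE; ring.
Qed.

Lemma lin_shift (R : realType) (n : nat) (v : 'I_n -> R) c (y : 'rV[R]_n) :
  simplex y -> lin (fun t => v t + c) y = lin v y + c.
Proof.
case=> _ h1; rewrite /lin.
under eq_bigr do rewrite mulrDr.
by rewrite big_split /= -mulr_suml h1 mul1r.
Qed.

Lemma convW (R : realType) (n : nat) (phi : 'rV[R]_n -> 'rV[R]_n -> 'rV[R]_n) mu :
  rel_interior mu -> respects_blackwell_for phi mu ->
  forall v a b lam, simplex a -> simplex b -> 0 < lam < 1 ->
  W phi mu (uv v) (av v) (lam *: a + (1 - lam) *: b) <=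
    lam * W phi mu (uv v) (av v) a + (1 - lam) * W phi mu (uv v) (av v) b.
Proof.
move=> hmu hbw v; apply: blackwell_convex => //.
- apply: finite_compact; exact: finite_finset.
- move=> t f U hU; have h := @discrete_set1 bool f; rewrite nbhs_simpl /=.
  apply: (filterS _ h) => b /= ->; exact: nbhs_singleton hU.
- move=> y _ a.
  have e : forall c, exp_util (uv v) y c = if c then lin v y else 0.
    by case; rewrite /exp_util /uv // big1 // => t _; rewrite mulr0.
  rewrite !e /av; case: a; case: (lerP 0 (lin v y)) => h //; exact: ltW h.
Qed.

Lemma L_neg (R : realType) (n : nat) (phi : 'rV[R]_n -> 'rV[R]_n -> 'rV[R]_n) mu v x0 x :
  rel_interior mu -> respects_blackwell_for phi mu ->
  simplex x0 -> simplex x -> 0 < lin v x0 -> lin v (phi mu x0) < 0 ->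
  lin v x < 0 -> lin v (phi mu x) < 0.
Proof.
move=> hmu hbw hx0 hx f0 g0 fx; rewrite ltNge; apply/negP => hphi.
set lam := lin v x0 / (lin v x0 - lin v x).
have hl : 0 < lam < 1.
  rewrite /lam; apply/andP; split; first by apply: divr_gt0; lra.
  by rewrite ltr_pdivrMr; lra.
have H := convW hmu hbw v hx hx0 hl.
rewrite !Wv_eq lin_conv in H.
have E : lam * lin v x + (1 - lam) * lin v x0 = 0.
  rewrite /lam; field; lra.
have hn : (0 <= lin v (phi mu x0)) = false by apply/negbTE; rewrite -ltNge.
rewrite E hphi hn in H.
have hl0 : 0 < lam by case/andP: hl.
have hlx : lam * lin v x < 0 by nra.
move: H; case: ifP => _ H; lra.
Qed.

Lemma L_pos (R : realType) (n : nat) (phi : 'rV[R]_n -> 'rV[R]_n -> 'rV[R]_n) mu v x0 x :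
  rel_interior mu -> respects_blackwell_for phi mu ->
  simplex x0 -> rel_interior x -> 0 < lin v x0 -> lin v (phi mu x0) < 0 ->
  0 < lin v x -> lin v (phi mu x) < 0.
Proof.
move=> hmu hbw hx0 hx f0 g0 fx; rewrite ltNge; apply/negP => hphi.
have [e [e0 e1 he]] := relint_min hx.
set p := (1 + e) *: x - e *: x0.
have hpt : forall t, p ord0 t = (1 + e) * x ord0 t - e * x0 ord0 t.
  by move=> t; rewrite !mxE.
have hp : simplex p.
  split.
  - move=> t; rewrite hpt.
    have := simplex_le1 t hx0; have := he t; case: (hx0) => h0 _; have := h0 t.
    move: (x ord0 t) (x0 ord0 t) => y z; nra.
  - under eq_bigr do rewrite hpt.
    rewrite big_split /= sumrN -!mulr_sumr; case: (hx) => _ ->; case: (hx0) => _ ->.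
    ring.
set lam := e / (1 + e).
have hl : 0 < lam < 1.
  rewrite /lam; apply/andP; split; first by apply: divr_gt0; lra.
  by rewrite ltr_pdivrMr; lra.
have hxe : lam *: x0 + (1 - lam) *: p = x.
  apply/matrixP => i t; rewrite !ord1 !mxE /lam; field; lra.
have H := convW hmu hbw v hx0 hp hl.
have hx' : simplex x by case: hx => h h1; split => // t; apply/ltW.
have hn : (0 <= lin v (phi mu x0)) = false by apply/negbTE; rewrite -ltNge.
have Fx : lin v x = lam * lin v x0 + (1 - lam) * lin v p by rewrite -lin_conv hxe.
rewrite hxe !Wv_eq hphi hn in H.
have hl0 : 0 < lam by case/andP: hl.
have hl1 : 0 < 1 - lam by case/andP: hl => _; rewrite subr_gt0.
move: H; case: ifP => _ H.
- have : lam * lin v x0 > 0 by nra.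
  lra.
- have : (1 - lam) * 0 = 0 by ring.
  lra.
Qed.

Lemma L_main (R : realType) (n : nat) (phi : 'rV[R]_n -> 'rV[R]_n -> 'rV[R]_n) mu v x0 x :
  updating_rule phi ->
  rel_interior mu -> respects_blackwell_for phi mu ->
  simplex x0 -> rel_interior x -> 0 < lin v x0 -> lin v (phi mu x0) < 0 ->
  lin v (phi mu x) < 0.
Proof.
move=> hup hmu hbw hx0 hx f0 g0.
have hx' : simplex x by case: hx => h h1; split => // t; apply/ltW.
case: (ltgtP (lin v x) 0) => fx.
- exact: L_neg hx0 hx' f0 g0 fx.
- exact: L_pos hx0 hx f0 g0 fx.
set d := - lin v (phi mu x0) / 2.
set v' := fun t => v t + d.
have hs0 := hup mu hmu x0 hx0.
have hs := hup mu hmu x hx'.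
have := @L_pos R n phi mu v' x0 x hmu hbw hx0 hx.
rewrite !lin_shift // fx /d => H.
have : lin v (phi mu x) + - lin v (phi mu x0) / 2 < 0.
  apply: H; lra.
lra.
Qed.

Lemma sum_two (R : realType) (n : nat) (p : 'rV[R]_n) (i j : 'I_n) (a b : R) :
  i != j ->
  lin (fun t => (t == i)%:R * a + (t == j)%:R * b) p = p ord0 i * a + p ord0 j * b.
Proof.
move=> hij; rewrite /lin.
under eq_bigr do rewrite mulrDr.
rewrite big_split /=; congr (_ + _).
- rewrite (bigD1 i) //= eqxx mul1r big1 ?addr0 // => t /negbTE ->; by rewrite mul0r mulr0.
- rewrite (bigD1 j) //= eqxx mul1r big1 ?addr0 // => t /negbTE ->; by rewrite mul0r mulr0.
Qed.

Lemma L_col (R : realType) (n : nat) (phi : 'rV[R]_n -> 'rV[R]_n -> 'rV[R]_n) mu x0 x i j :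
  updating_rule phi ->
  rel_interior mu -> respects_blackwell_for phi mu ->
  simplex x0 -> rel_interior x ->
  (phi mu x0 ord0 i - x0 ord0 i) * (phi mu x ord0 j - phi mu x0 ord0 j) =
  (phi mu x0 ord0 j - x0 ord0 j) * (phi mu x ord0 i - phi mu x0 ord0 i).
Proof.
move=> hup hmu hbw hx0 hx.
have hx' : simplex x by case: hx => h h1; split => // t; apply/ltW.
set y := phi mu x0; set z := phi mu x.
have hy : simplex y := hup mu hmu x0 hx0.
have hz : simplex z := hup mu hmu x hx'.
set di := y ord0 i - x0 ord0 i; set dj := y ord0 j - x0 ord0 j.
set ei := z ord0 i - y ord0 i; set ej := z ord0 j - y ord0 j.
apply/eqP; rewrite -subr_eq0; apply/negPn/negP => hD.
set D := di * ej - dj * ei.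
have hij : i != j.
  apply/negP => /eqP hij; move: hD; rewrite /D /di /dj /ei /ej hij.
  by rewrite mulrC subrr eqxx.
set wi := (-2 * ej - dj) / D; set wj := (di + 2 * ei) / D.
set w := fun t : 'I_n => (t == i)%:R * wi + (t == j)%:R * wj.
set c := - (lin w y + 1).
set v := fun t => w t + c.
have hlin : forall p, simplex p -> lin v p = p ord0 i * wi + p ord0 j * wj + c.
  by move=> p hp; rewrite lin_shift // sum_two.
have H := @L_main R n phi mu v x0 x hup hmu hbw hx0 hx.
have E0 : lin v x0 = 1.
  rewrite hlin // /c sum_two //.
  have : di * wi + dj * wj = -2 by rewrite /wi /wj /D; field.
  rewrite /di /dj => h; lra.
have E1 : lin v y = -1.
  by rewrite hlin // /c sum_two //; ring.
have E2 : lin v z = 0.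
  rewrite hlin // /c sum_two //.
  have : ei * wi + ej * wj = 1 by rewrite /wi /wj /D; field.
  rewrite /ei /ej => h; lra.
have h1 : 0 < lin v x0 by rewrite E0; lra.
have h2 : lin v y < 0 by rewrite E1; lra.
by have := H h1 h2; rewrite E2 ltxx.
Qed.

Lemma par_scale (R : realType) (n : nat) (a b : 'I_n -> R) k :
  a k != 0 -> (forall i j, a i * b j = a j * b i) ->
  forall j, b j = (b k / a k) * a j.
Proof.
move=> hk h j; have := h k j => e.
apply: (mulfI hk); rewrite e; field; exact: hk.
Qed.

Lemma sum_delta (R : realType) (n : nat) (a : 'I_n) :
  \sum_(t < n) ((t == a)%:R : R) = 1.
Proof.
rewrite (bigD1 a) //= eqxx big1 ?addr0 // => t /negbTE -> //.
Qed.

Lemma rv_neq (R : realType) (n : nat) (x y : 'rV[R]_n) :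
  x <> y -> exists k, y ord0 k - x ord0 k != 0.
Proof.
move=> hne; apply: contrapT => hno; apply: hne; apply/matrixP => i t.
rewrite !ord1; apply/eqP; rewrite eq_sym -subr_eq0; apply/negPn/negP => h.
by apply: hno; exists t.
Qed.

Lemma off_line (R : realType) (n : nat) (mu x0 : 'rV[R]_n) (d : 'I_n -> R) :
  (3 <= n)%N -> rel_interior mu ->
  exists x1 : 'rV[R]_n, rel_interior x1 /\
    forall kap, exists t, x1 ord0 t - x0 ord0 t != kap * d t.
Proof.
move=> hn hmu.
have [e [e0 e1 he]] := relint_min hmu.
have h0n : (0 < n)%N by apply: leq_trans hn.
have h1n : (1 < n)%N by apply: leq_trans hn.
have h2n : (2 < n)%N by [].
pose i0 := Ordinal h0n; pose i1 := Ordinal h1n; pose i2 := Ordinal h2n.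
pose cand (j : 'I_n) : 'rV[R]_n :=
  mu + (e / 2) *: (\row_t ((t == i0)%:R - (t == j)%:R)).
have hct : forall j t, cand j ord0 t = mu ord0 t + e / 2 * ((t == i0)%:R - (t == j)%:R).
  by move=> j t; rewrite !mxE.
have hcand : forall j, rel_interior (cand j).
  move=> j; split.
  - move=> t; rewrite hct; have := he t.
    have : -1 <= ((t == i0)%:R - (t == j)%:R :> R).
      by case: (t == i0); case: (t == j); rewrite /=; lra.
    move: ((t == i0)%:R - (t == j)%:R) => w hw ht; nra.
  - under eq_bigr do rewrite hct.
    rewrite big_split /= -mulr_sumr sumrB !sum_delta; case: hmu => _ ->; ring.
apply: contrapT => hno.
have line : forall b, rel_interior b -> exists kap, forall t, b ord0 t - x0 ord0 t = kap * d t.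
  move=> b hb; apply: contrapT => h1; apply: hno; exists b; split => // kap.
  apply: contrapT => h2; apply: h1; exists kap => t; apply: contrapT => h3.
  by apply: h2; exists t; apply/eqP.
have [al hal] := line mu hmu.
have [be hbe] := line _ (hcand i1).
have [ga hga] := line _ (hcand i2).
have E1 := hbe i0; have E2 := hbe i2; have E3 := hga i0; have E4 := hga i2.
have E5 := hal i0; have E6 := hal i2.
rewrite !hct /= in E1 E2 E3 E4.
move: E1 E2 E3 E4 E5 E6; rewrite ?eqxx /=.
move=> E1 E2 E3 E4 E5 E6.
have e2 : 0 < e / 2 by lra.
move: E1 E2 E3 E4 E5 E6 e2.
move: (e / 2) (mu ord0 i0) (mu ord0 i2) (x0 ord0 i0) (x0 ord0 i2) (d i0) (d i2) => ep m0 m2 y0 y2 d0 d2.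
rewrite /=; move=> E1 E2 E3 E4 E5 E6 e2.
have F1 : ep = (be - al) * d0 by lra.
have F2 : ep = (ga - al) * d0 by lra.
have F3 : 0 = (be - al) * d2 by lra.
have F4 : - ep = (ga - al) * d2 by lra.
nra.
Qed.

Lemma const_relint (R : realType) (n : nat) (phi : 'rV[R]_n -> 'rV[R]_n -> 'rV[R]_n) mu x0 :
  (3 <= n)%N -> updating_rule phi ->
  rel_interior mu -> respects_blackwell_for phi mu ->
  simplex x0 -> phi mu x0 <> x0 ->
  exists c, forall x, rel_interior x -> phi mu x = c.
Proof.
move=> hn hup hmu hbw hx0 hne.
set y := phi mu x0.
set d := fun t => y ord0 t - x0 ord0 t.
have [k hk] := rv_neq (fun e => hne (esym e)).
have tau : forall x, rel_interior x -> forall j,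
    phi mu x ord0 j - y ord0 j = ((phi mu x ord0 k - y ord0 k) / d k) * d j.
  move=> x hx j.
  have P : forall i j, d i * (phi mu x ord0 j - y ord0 j) = d j * (phi mu x ord0 i - y ord0 i).
    move=> i j'; exact: L_col.
  exact: (@par_scale R n d (fun t => phi mu x ord0 t - y ord0 t) k hk P j).
have [x1 [hx1 hoff]] := off_line x0 d hn hmu.
have hx1' : simplex x1 by case: hx1 => h h1; split => // t; apply/ltW.
set s := (phi mu x1 ord0 k - y ord0 k) / d k.
set d1 := fun t => phi mu x1 ord0 t - x1 ord0 t.
have hd1 : forall t, d1 t = (1 + s) * d t - (x1 ord0 t - x0 ord0 t).
  move=> t; rewrite /d1; have := tau x1 hx1 t; rewrite -/s /d => h; lra.
have [k1 hk1] : exists k1, d1 k1 != 0.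
  apply: contrapT => hno; have [t ht] := hoff (1 + s); apply/negP: ht.
  have : d1 t = 0 by apply: contrapT => h; apply: hno; exists t; apply/eqP.
  rewrite hd1 => h; rewrite negbK; apply/eqP; lra.
exists (phi mu x1) => x hx.
set c := (phi mu x ord0 k1 - phi mu x1 ord0 k1) / d1 k1.
have hc : forall j, phi mu x ord0 j - phi mu x1 ord0 j = c * d1 j.
  have P : forall i j, d1 i * (phi mu x ord0 j - phi mu x1 ord0 j) =
      d1 j * (phi mu x ord0 i - phi mu x1 ord0 i).
    move=> i j; rewrite /d1; exact: L_col.
  move=> j; exact: (@par_scale R n d1 (fun t => phi mu x ord0 t - phi mu x1 ord0 t) k1 hk1 P j).
set tt := (phi mu x ord0 k - y ord0 k) / d k.
have ht : forall j, phi mu x ord0 j - phi mu x1 ord0 j = (tt - s) * d j.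
  move=> j; have := tau x hx j; have := tau x1 hx1 j; rewrite -/s -/tt => h1 h2.
  lra.
have [c00|c0] := eqVneq c 0.
  apply/matrixP => i j; rewrite !ord1; have := hc j; rewrite c00 mul0r => h; lra.
have [t hnt] := hoff ((1 + s) - (tt - s) / c).
exfalso; move/negP: hnt; apply; apply/eqP.
have := hc t; rewrite ht hd1 => h.
have E : (tt - s) / c * d t = (1 + s) * d t - (x1 ord0 t - x0 ord0 t).
  rewrite mulrAC h; field; exact: c0.
rewrite mulrBl E; ring.
Qed.

Lemma relint_closure (R : realType) (n : nat) (mu a : 'rV[R]_n) :
  rel_interior mu -> simplex a -> closure (@rel_interior R n) a.
Proof.
move=> hmu ha B /nbhs_ballP [r /= r0 hB].
set v := mu - a.
have hv : 0 <= `|v| := normr_ge0 v.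
move: hv; set N := `|v| => hv.
set t := r / (r + N).
have hrv : 0 < r + N by lra.
have t0 : 0 < t by rewrite /t divr_gt0.
have t1 : t <= 1 by rewrite /t ler_pdivrMr //; lra.
have tv : t * N < r.
  rewrite /t mulrAC ltr_pdivrMr //.
  nra.
exists (a + t *: v); split.
- split.
  + move=> i; rewrite !mxE; case: hmu => h _; case: ha => h' _.
    have := h i; have := h' i; move: (mu ord0 i) (a ord0 i) => x y; nra.
  + under eq_bigr do rewrite !mxE.
    rewrite big_split /= -mulr_sumr big_split /= sumrN.
    case: hmu => _ ->; case: ha => _ ->; ring.
- apply: hB; rewrite -ball_normE /=.
  by rewrite opprD addNKr normrN normrZ gtr0_norm // -/N.
Qed.

Lemma cont_ext (R : realType) (n : nat) (f g : 'rV[R]_n -> 'rV[R]_n) (mu a : 'rV[R]_n) :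
  {within (@simplex R n), continuous f} -> continuous g ->
  rel_interior mu -> simplex a ->
  (forall x, rel_interior x -> f x = g x) -> f a = g a.
Proof.
move=> hf hg hmu ha hfg.
have hcl := relint_closure hmu ha.
have PF : ProperFilter (within (@rel_interior R n) (nbhs a)) := within_nbhs_proper hcl.
have hf' := (proj1 (subspace_continuousP _ _) hf) a ha.
have sub : (@rel_interior R n) `<=` (@simplex R n).
  by move=> x [h h1]; split => // t; apply/ltW.
have c1 : f @ within (@rel_interior R n) (nbhs a) --> f a.
  apply: cvg_trans hf'; apply: cvg_fmap2; exact: within_subset.
have c2 : f @ within (@rel_interior R n) (nbhs a) --> g a.
  apply: cvg_trans (hg a); apply: cvg_trans (fmap_within_eq _ _) _.
    by move=> x; rewrite inE => hx; exact: hfg.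
  apply: cvg_fmap2; exact: cvg_within.
exact: cvg_unique c1 c2.
Qed.

Theorem corollary2 (R : realType) (n : nat) (phi : 'rV[R]_n -> 'rV[R]_n -> 'rV[R]_n) :
  (3 <= n)%N ->
  updating_rule phi -> nontrivial_rule phi -> continuously_distorts phi ->
  (respects_blackwell phi <-> is_bayes phi).
Proof.
move=> hn hup hnt hcd; split; last exact: bayes_respects.
move=> hbw mu hmu x hx.
have hbwm := hbw mu hmu.
apply: contrapT => hne.
have [c hc] := const_relint hn hup hmu hbwm hx hne.
have hconst : forall a, simplex a -> phi mu a = c.
  move=> a ha.
  have h2 : continuous (fun _ : 'rV[R]_n => c) := @cst_continuous _ _ c.
  exact: (@cont_ext R n (phi mu) (fun _ => c) mu a (hcd mu hmu) h2 hmu ha hc).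
have [a [b [ha hb hab]]] := hnt mu hmu.
by apply: hab; rewrite !hconst.
Qed.
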